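(* Let $(V,\{\nu_n\})$ and $(W,\{\omega_n\})$ be $L^\infty$-MOS's and $\phi:V\to W$ a completely gauge-contractive linear map. Then the unital extension $\phi_1:V_1\to W_1$, $\phi_1(x,\lambda)=(\phi(x),\lambda)$, is completely positive. If moreover $\phi$ is completely gauge-isometric, then $\phi_1$ is a complete order embedding.
   Context: An $L^\infty$-MOS is a complex $*$-vector space $V$ ($M_n(V)$ with $(x_{ij})^*=(x_{ji}^* )$, self-adjoint part $M_n(V)_{sa}$) with proper gauges $\nu_n:M_n(V)_{sa}\to[0,\infty)$ (subadditive, positively homogeneous, $\nu_n(A)=\nu_n(-A)=0\Rightarrow A=0$) such that $\nu_k(X^*AX)\le\|X\|^2\nu_n(A)$ for scalar $X\in M_{n,k}$ and $\nu_{n+k}(A\oplus B)=\max\{\nu_n(A),\nu_k(B)\}$. A linear map $\phi$ between $L^\infty$-MOS's is completely gauge-contractive if $\phi(x^* )=\phi(x)^*$ and $\omega_n(\phi^{(n)}(A))\le\nu_n(A)$ for all $n$, $A\in M_n(V)_{sa}$; completely gauge-isometric if it is self-adjoint and $\omega_n(\phi^{(n)}(A))=\nu_n(A)$ for all $n$, $A$. Unitization: $V_1=V\oplus\mathbb{C}$, $M_n(V_1)=M_n(V)\oplus M_n$, $(A,X)^*=(A^*,X^* )$, $X_t=tI_n-X$, $Y\gg0$ means positive invertible, $u_n(A,X)=\inf\{t>0:X_t\gg0,\ \nu_n(X_t^{-1/2}AX_t^{-1/2})\le1\}$, with cones $M_n(V_1)_+=\{(A,X):u_n(-A,-X)=0\}$;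 similarly for $W_1$. Completely positive: each amplification maps positive cones into positive cones; complete order embedding: injective with $\phi_1^{(n)}(Z)\ge0$ iff $Z\ge0$ for all $n$. *)

(* Defs.v *)
From HB Require Import structures.
From mathcomp Require Import all_boot all_order all_algebra.
From Stdlib Require Import ClassicalEpsilon.
Set Implicit Arguments. Unset Strict Implicit. Unset Printing Implicit Defensive.
Import Order.TTheory GRing.Theory Num.Theory.
Local Open Scope ring_scope.

Section Defs.
Variable C : numClosedFieldType.

Definition adjmx m n (X : 'M[C]_(m, n)) : 'M[C]_(n, m) := (map_mx Num.conj X)^T.

Definition hnorm2 n (v : 'cV[C]_n) : C := \sum_i v i 0 * Num.conj (v i 0).

(* c = ||X||^2 (operator norm squared): the least c with ||Xv||^2 <= c ||v||^2 *)
Definition is_opnorm2 m n (X : 'M[C]_(m, n)) (c : C) : Prop :=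
  (forall v : 'cV[C]_n, hnorm2 (X *m v) <= c * hnorm2 v) /\
  (forall d : C, (forall v : 'cV[C]_n, hnorm2 (X *m v) <= d * hnorm2 v) -> c <= d).

Definition psd n (Y : 'M[C]_n) : Prop :=
  adjmx Y = Y /\ forall v : 'cV[C]_n, 0 <= (adjmx v *m Y *m v) 0 0.

Definition posinv n (Y : 'M[C]_n) : Prop := psd Y /\ Y \in unitmx.

Definition psqrt n (Y : 'M[C]_n) : 'M[C]_n :=
  epsilon (inhabits 0) (fun S : 'M[C]_n => psd S /\ S *m S = Y).

Definition Xt n (t : C) (X : 'M[C]_n) : 'M[C]_n := t%:M - X.
Definition Xt_isqrt n (t : C) (X : 'M[C]_n) : 'M[C]_n := psqrt (invmx (Xt t X)).

Variable V : lmodType C.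

Definition smulmx m n p (X : 'M[C]_(m, n)) (A : 'M[V]_(n, p)) : 'M[V]_(m, p) :=
  \matrix_(i, j) \sum_k (X i k *: A k j).
Definition mulmxs m n p (A : 'M[V]_(m, n)) (X : 'M[C]_(n, p)) : 'M[V]_(m, p) :=
  \matrix_(i, j) \sum_k (X k j *: A i k).

Definition congmx n k (X : 'M[C]_(n, k)) (A : 'M[V]_n) : 'M[V]_k :=
  smulmx (adjmx X) (mulmxs A X).

Definition scalemxV m n (t : C) (A : 'M[V]_(m, n)) : 'M[V]_(m, n) :=
  map_mx (fun v => t *: v) A.

Definition mxstar (star : V -> V) m n (A : 'M[V]_(m, n)) : 'M[V]_(n, m) :=
  (map_mx star A)^T.
Definition sa (star : V -> V) n (A : 'M[V]_n) : Prop := mxstar star A = A.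

Definition is_star (star : V -> V) : Prop :=
  (forall x, star (star x) = x) /\
  (forall x y, star (x + y) = star x + star y) /\
  (forall (a : C) x, star (a *: x) = Num.conj a *: star x).

Definition is_LinfMOS (star : V -> V) (nu : forall n, 'M[V]_n -> C) : Prop :=
  is_star star /\
  (forall n (A : 'M[V]_n), sa star A -> 0 <= nu n A) /\
  (forall n (A B : 'M[V]_n), sa star A -> sa star B -> nu n (A + B) <= nu n A + nu n B) /\
  (forall n (A : 'M[V]_n) (t : C), sa star A -> 0 < t -> nu n (scalemxV t A) = t * nu n A) /\
  (forall n (A : 'M[V]_n), sa star A -> nu n A = 0 -> nu n (- A) = 0 -> A = 0) /\
  (forall n k (X : 'M[C]_(n, k)) (A : 'M[V]_n) (c : C), sa star A ->
      is_opnorm2 X c -> nu k (congmx X A) <= c * nu n A) /\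
  (forall n k (A : 'M[V]_n) (B : 'M[V]_k), sa star A -> sa star B ->
      nu (n + k)%N (block_mx A 0 0 B) = Num.max (nu n A) (nu k B)).

(* u_n(A, X) = 0, i.e. inf{t > 0 : X_t >> 0, nu_n(X_t^{-1/2} A X_t^{-1/2}) <= 1} = 0 *)
Definition u_zero (nu : forall n, 'M[V]_n -> C) n (A : 'M[V]_n) (X : 'M[C]_n) : Prop :=
  forall eps : C, 0 < eps -> exists t : C,
    [/\ 0 < t, t < eps, posinv (Xt t X) &
        nu n (smulmx (Xt_isqrt t X) (mulmxs A (Xt_isqrt t X))) <= 1].

(* positive cone of the unitization: (A, X) in M_n(V_1)_sa with u_n(-A,-X) = 0 *)
Definition pos1 (star : V -> V) (nu : forall n, 'M[V]_n -> C) n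
    (A : 'M[V]_n) (X : 'M[C]_n) : Prop :=
  [/\ sa star A, adjmx X = X & u_zero nu (- A) (- X)].

End Defs.

Section Maps.
Variable C : numClosedFieldType.
Variables V W : lmodType C.

Definition gauge_contractive (starV : V -> V) (nuV : forall n, 'M[V]_n -> C)
    (starW : W -> W) (nuW : forall n, 'M[W]_n -> C) (phi : V -> W) : Prop :=
  (forall x, phi (starV x) = starW (phi x)) /\
  (forall n (A : 'M[V]_n), sa starV A -> nuW n (map_mx phi A) <= nuV n A).

Definition gauge_isometric (starV : V -> V) (nuV : forall n, 'M[V]_n -> C)
    (starW : W -> W) (nuW : forall n, 'M[W]_n -> C) (phi : V -> W) : Prop :=
  (forall x, phi (starV x) = starW (phi x)) /\
  (forall n (A : 'M[V]_n), sa starV A -> nuW n (map_mx phi A) = nuV n A).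

(* phi_1 (x, lambda) = (phi x, lambda); on M_n(V_1) = M_n(V) x M_n : (A, X) |-> (phi A, X) *)
Definition unital_ext (phi : V -> W) (p : V * C) : W * C := (phi p.1, p.2).

Definition completely_positive1 (starV : V -> V) (nuV : forall n, 'M[V]_n -> C)
    (starW : W -> W) (nuW : forall n, 'M[W]_n -> C) (phi : V -> W) : Prop :=
  forall n (A : 'M[V]_n) (X : 'M[C]_n),
    pos1 starV nuV A X -> pos1 starW nuW (map_mx phi A) X.

Definition complete_order_embedding1 (starV : V -> V) (nuV : forall n, 'M[V]_n -> C)
    (starW : W -> W) (nuW : forall n, 'M[W]_n -> C) (phi : V -> W) : Prop :=
  injective (unital_ext phi) /\
  forall n (A : 'M[V]_n) (X : 'M[C]_n),
    pos1 starW nuW (map_mx phi A) X <-> pos1 starV nuV A X.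
End Maps.

(* Main.v *)
Require Import Defs.
From mathcomp Require Import all_boot all_order all_algebra.
From Stdlib Require Import ClassicalEpsilon.
Import Order.TTheory GRing.Theory Num.Theory.
Local Open Scope ring_scope.
Local Open Scope sesquilinear_scope.

Section Sq.
Variable C : numClosedFieldType.

Lemma adjmxE {m n} (X : 'M[C]_(m, n)) : adjmx X = X ^t*.
Proof. by rewrite /adjmx map_trmx. Qed.

Lemma adjmxM m n p (X : 'M[C]_(m, n)) (Y : 'M[C]_(n, p)) :
  adjmx (X *m Y) = adjmx Y *m adjmx X.
Proof. by rewrite /adjmx map_mxM trmx_mul. Qed.

Lemma adjmxK m n (X : 'M[C]_(m, n)) : adjmx (adjmx X) = X.
Proof. by rewrite !adjmxE trmxCK. Qed.

Lemma adjmx_diag n (d : 'rV[C]_n) : adjmx (diag_mx d) = diag_mx (map_mx Num.conj d).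
Proof. by rewrite /adjmx map_diag_mx tr_diag_mx. Qed.

Lemma psd_sqrt_ex n (Y : 'M[C]_n) : psd Y -> exists S, psd S /\ S *m S = Y.
Proof.
move=> [hY qY].
have nY : Y \is normalmx by apply/normalmxP; rewrite -adjmxE hY.
have eY := orthomx_spectralP nY.
set P := spectralmx Y in eY; set d := spectral_diag Y in eY.
have PU : P \is unitarymx by apply: spectral_unitarymx.
have PPt : P *m P^t* = 1%:M by apply/unitarymxP.
have iP : invmx P = P^t* by apply: invmx_unitary.
rewrite iP in eY.
have PtP : P^t* *m P = 1%:M.
  by rewrite -iP mulVmx // spectral_unit.
have dge0 : forall i, 0 <= d 0 i.
  move=> i; have := qY (P^t* *m delta_mx i 0).
  rewrite adjmxM !adjmxE trmxCK.
  have -> : (delta_mx i 0 : 'cV[C]_n) ^t* = delta_mx 0 i.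
    by apply/matrixP => a b; rewrite !mxE; case: (_ == _); case: (_ == _); rewrite /= ?conjC0 ?conjC1.
  rewrite eY !mulmxA -(mulmxA _ P) PPt mulmx1.
  idtac.
  rewrite -(mulmxA _ P) PPt mulmx1 -rowE -colE.
  by rewrite !mxE eqxx mulr1n.
pose s := \row_i sqrtC (d 0 i).
exists (P^t* *m diag_mx s *m P); split; last first.
  rewrite -!mulmxA (mulmxA P) PPt mul1mx.
  rewrite (mulmxA (diag_mx s)) mulmx_diag !mulmxA eY.
  congr (_ *m diag_mx _ *m _); apply/rowP => i; rewrite !mxE -expr2 sqrtCK //.
have sc : map_mx Num.conj s = s.
  by apply/rowP => i; rewrite !mxE geC0_conj // sqrtC_ge0.
split.
  by rewrite !adjmxM adjmx_diag sc !adjmxE trmxCK mulmxA.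
move=> v; set w := P *m v.
have -> : adjmx v *m (P^t* *m diag_mx s *m P) *m v = adjmx w *m diag_mx s *m w.
  by rewrite /w adjmxM (adjmxE P) !mulmxA.
rewrite mul_mx_diag !mxE; apply: sumr_ge0 => i _; rewrite !mxE.
by rewrite mulrAC mulr_ge0 ?sqrtC_ge0 // mulrC mul_conjC_ge0.
Qed.

Lemma psd_inv n (Y : 'M[C]_n) : posinv Y -> psd (invmx Y).
Proof.
move=> [[hY qY] uY]; split.
  by rewrite /adjmx map_invmx trmx_inv; rewrite /adjmx in hY; rewrite hY.
have hI : adjmx (invmx Y) = invmx Y.
  by rewrite /adjmx map_invmx trmx_inv; rewrite /adjmx in hY; rewrite hY.
move=> v; have := qY (invmx Y *m v).
rewrite adjmxM hI -!mulmxA (mulmxA Y) mulmxV // mul1mx.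
by rewrite !mulmxA.
Qed.

Lemma psqrt_herm n (Y : 'M[C]_n) : psd Y -> adjmx (psqrt Y) = psqrt Y.
Proof.
move=> /psd_sqrt_ex ex; rewrite /psqrt.
case: (epsilon_spec (inhabits 0) (fun S : 'M[C]_n => psd S /\ S *m S = Y) ex).
by move=> [].
Qed.

Lemma Xt_isqrt_herm n t (X : 'M[C]_n) : posinv (Xt t X) ->
  adjmx (Xt_isqrt t X) = Xt_isqrt t X.
Proof. by move=> h; apply: psqrt_herm; apply: psd_inv. Qed.
End Sq.
Section St.
Variable C : numClosedFieldType.
Variable V : lmodType C.
Variable star : V -> V.
Hypothesis hs : is_star star.

Lemma star0 : star 0 = 0.
Proof.
case: hs => _ [hD _]; have h := hD 0 0; rewrite addr0 in h.
by apply: (addrI (star 0)); rewrite addr0 -h.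
Qed.

Lemma starD x y : star (x + y) = star x + star y.
Proof. by case: hs => _ []. Qed.

Lemma starZ (a : C) x : star (a *: x) = Num.conj a *: star x.
Proof. by case: hs => _ []. Qed.

Lemma starN x : star (- x) = - star x.
Proof.
apply/eqP; rewrite -subr_eq0 opprK -starD addNr star0 //.
Qed.

Lemma star_sum I (r : seq I) (P : pred I) (F : I -> V) :
  star (\sum_(i <- r | P i) F i) = \sum_(i <- r | P i) star (F i).
Proof. exact: (big_morph star starD star0). Qed.

Lemma sa_neg n (A : 'M[V]_n) : sa star A -> sa star (- A).
Proof.
rewrite /sa /mxstar => /matrixP hA; apply/matrixP => i j.
by rewrite !mxE starN; have := hA i j; rewrite !mxE => ->.
Qed.

Lemma sa_cong n (S : 'M[C]_n) (A : 'M[V]_n) :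
  adjmx S = S -> sa star A -> sa star (smulmx S (mulmxs A S)).
Proof.
rewrite /sa /mxstar /adjmx => /matrixP hS /matrixP hA; apply/matrixP => i j.
have eS : forall a b, Num.conj (S a b) = S b a.
  by move=> a b; have := hS b a; rewrite !mxE.
have eA : forall a b, star (A a b) = A b a.
  by move=> a b; have := hA b a; rewrite !mxE.
rewrite !mxE star_sum.
under eq_bigr => k _ do rewrite mxE starZ star_sum eS scaler_sumr.
under [RHS]eq_bigr => k _ do rewrite mxE scaler_sumr.
rewrite exchange_big /=; apply: eq_bigr => l _; apply: eq_bigr => k _.
by rewrite starZ eS eA !scalerA mulrC.
Qed.
End St.
Arguments star0 {C V star} hs.
Arguments starD {C V star} hs x y.
Arguments starZ {C V star} hs a x.
Arguments starN {C V star} hs x.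
Arguments sa_neg {C V star} hs {n A}.
Arguments sa_cong {C V star} hs {n S A}.

Section Lin.
Variable C : numClosedFieldType.
Variables V W : lmodType C.
Variable phi : {linear V -> W}.

Lemma map_cong n (S : 'M[C]_n) (A : 'M[V]_n) :
  map_mx phi (smulmx S (mulmxs A S)) = smulmx S (mulmxs (map_mx phi A) S).
Proof.
apply/matrixP => i j; rewrite !mxE linear_sum; apply: eq_bigr => k _.
rewrite !mxE linearZ linear_sum /=; congr (_ *: _); apply: eq_bigr => l _.
by rewrite !mxE linearZ.
Qed.

Lemma map_mxN' m n (A : 'M[V]_(m, n)) : map_mx phi (- A) = - map_mx phi A.
Proof. by apply/matrixP => i j; rewrite !mxE raddfN. Qed.
End Lin.

Lemma nu0 (C : numClosedFieldType) (V : lmodType C) (star : V -> V)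
  (nu : forall n, 'M[V]_n -> C) n : is_LinfMOS star nu -> nu n 0 = 0.
Proof.
move=> [st [_ [_ [hom _]]]].
have sa0 : sa star (0 : 'M[V]_n).
  by apply/matrixP => i j; rewrite !mxE (star0 st).
have := hom n 0 2 sa0 (ltr0Sn _ 1).
have -> : scalemxV 2 (0 : 'M[V]_n) = 0 by apply/matrixP => i j; rewrite !mxE scaler0.
move=> h; apply/eqP; apply: contraT => nz.
have : nu n 0 * 1 = nu n 0 * 2 by rewrite mulr1 mulrC -h.
by move/(mulfI nz)/eqP; rewrite (eqr_nat _ 1 2).
Qed.

Lemma phi_inj (C : numClosedFieldType) (V W : lmodType C)
    (starV : V -> V) (nuV : forall n, 'M[V]_n -> C)
    (starW : W -> W) (nuW : forall n, 'M[W]_n -> C)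
    (phi : {linear V -> W}) :
  is_LinfMOS starV nuV -> is_LinfMOS starW nuW ->
  gauge_isometric starV nuV starW nuW phi -> injective phi.
Proof.
move=> hV hW [hst heq].
have stV := proj1 hV; have stW := proj1 hW.
have prop := proj1 (proj2 (proj2 (proj2 (proj2 hV)))).
have sa0 : forall y, starV y = y -> phi y = 0 -> y = 0.
  move=> y sy py; pose M := (const_mx y : 'M[V]_1).
  have sM : sa starV M by apply/matrixP => i j; rewrite !mxE sy.
  have pM : map_mx phi M = 0 by apply/matrixP => i j; rewrite !mxE py.
  have e1 : nuV 1 M = 0 by rewrite -heq // pM (@nu0 _ _ _ _ _ hW).
  have e2 : nuV 1 (- M) = 0.
    rewrite -heq; last exact: (sa_neg stV).
    by rewrite ?(sa_neg stV) // (@map_mxN' _ _ _ phi) pM oppr0 (@nu0 _ _ _ _ _ hW).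
  have := prop 1%N M sM e1 e2 => /matrixP /(_ 0 0); rewrite !mxE //.
have inj0 : forall x, phi x = 0 -> x = 0.
  move=> x px.
  have ha : x + starV x = 0.
    apply: (sa0); first by rewrite (starD stV) (proj1 stV) addrC.
    by rewrite linearD /= (hst x) px (star0 stW) addr0.
  have hb : 'i *: (x - starV x) = 0.
    apply: (sa0).
      rewrite (starZ stV) (starD stV) (starN stV) (proj1 stV) conjCi.
      by rewrite scaleNr -scalerN opprB addrC.
    by rewrite linearZ linearB /= (hst x) px (star0 stW) subr0 scaler0.
  have : x *+ 2 = 0.
    have hb' : x - starV x = 0.
      by move: hb => /eqP; rewrite scaler_eq0 (negbTE (neq0Ci _)) /= => /eqP.
    by rewrite mulr2n -{1}(subrK (starV x) x) hb' add0r addrC ha.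
  by move/eqP; rewrite -scaler_nat scaler_eq0 pnatr_eq0 /= => /eqP.
move=> x y e; apply/eqP; rewrite -subr_eq0; apply/eqP; apply: inj0.
by rewrite linearB /= e subrr.
Qed.

Theorem theorem3p13 (C : numClosedFieldType) (V W : lmodType C)
    (starV : V -> V) (nuV : forall n, 'M[V]_n -> C)
    (starW : W -> W) (nuW : forall n, 'M[W]_n -> C)
    (phi : {linear V -> W}) :
  is_LinfMOS starV nuV -> is_LinfMOS starW nuW ->
  gauge_contractive starV nuV starW nuW phi ->
  completely_positive1 starV nuV starW nuW phi /\
  (gauge_isometric starV nuV starW nuW phi ->
   complete_order_embedding1 starV nuV starW nuW phi).
Proof.
move=> hV hW [hst hle].
have stV := proj1 hV; have stW := proj1 hW.
have CP : completely_positive1 starV nuV starW nuW phi.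
  move=> n A X [saA hX uz]; split => //.
    apply/matrixP => i j; move/matrixP: saA => /(_ i j); rewrite !mxE => <-.
    by rewrite hst.
  move=> eps he; have [t [t0 te pX hn]] := uz eps he; exists t; split => //.
  rewrite -(@map_mxN' _ _ _ phi) -(@map_cong _ _ _ phi); apply: le_trans (hle _ _ _) hn.
  by apply: (sa_cong stV); [apply: Xt_isqrt_herm | apply: (sa_neg stV)].
split => // hiso; have inj := @phi_inj _ _ _ _ _ _ _ phi hV hW hiso.
split.
  by move=> [x a] [y b] /= [e1 e2]; rewrite (inj _ _ e1) e2.
move=> n A X; split; last exact: CP.
move=> [saW hX uz].
have saA : sa starV A.
  apply/matrixP => i j; apply: inj; move/matrixP: saW => /(_ i j).
  by rewrite !mxE hst.
split => // eps he; have [t [t0 te pX hn]] := uz eps he; exists t; split => //.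
have sB := sa_cong stV (@Xt_isqrt_herm _ _ _ _ pX) (sa_neg stV saA).
by rewrite -(proj2 hiso _ _ sB) (@map_cong _ _ _ phi) (@map_mxN' _ _ _ phi).
Qed.
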